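(* Let $n\ge1$, let $q=P^{+}(g(n))$ be the largest prime factor of $g(n)$, and let $(\gamma_k)_{0\le k\le \ell+1}$ be a $q$-admissible $g$-sequence of finite length $\ell\ge1$, with associated intervals $J_k$. Then for every $0\le k\le \ell$, the interval $qJ_k=\{qx: x\in J_k\}$ contains at most one prime that does not divide $g(n)$. Moreover, for every $0\le k\le \ell$ such that $\dfrac{\theta(q\gamma_{k+1})}{q}-k\dfrac{\log q}{q}>0$, \[ q\le \frac{\log g(n)}{\dfrac{\theta(q\gamma_{k+1})}{q}-k\dfrac{\log q}{q}-\dfrac{\sum_{j=1}^{k+1}\log\gamma_j}{q}}\le \frac{\log g(n)}{\dfrac{\theta(q\gamma_{k+1})}{q}-k\dfrac{\log q}{q}}. \]
   Context: $g(n)$ is the maximal order of an element of $\mathfrak S_n$, i.e. $g(n)=\max\{M\ge1:\ell(M)\le n\}$ with $\ell$ additive, $\ell(1)=0$, $\ell(p^a)=p^a$. $\theta(x)=\sum_{p\le x}\log p$ (sum over primes). Intervals $(a,b]$ are open on the left, closed on the right. A $g$-sequence of length $\ell$ is a finite sequence $(\gamma_k)_{0\le k\le\ell+1}$ with $\gamma_0=0$, $\gamma_1=1/2$ and, for $1\le k\le\ell$, $0<\gamma_k<1$ and $\gamma_k<\gamma_{k+1}<(1+\gamma_k^2)/2$. Its associated intervals are $I_0=(0,1/4]$, $J_0=(0,1/2]$ and, for $1\le k\le\ell$, $I_k=(\alpha_k,\beta_k]$, $J_k=(\gamma_k,\gamma_{k+1}]$ with $\alpha_k=2\gamma_{k+1}-1$,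 $\beta_k=\gamma_k^2$. For $y\ge12$, such a sequence is $y$-admissible if, letting $m_k$ ($1\le k\le\ell$) be the number of indices $j\in\{0,1,\dots,\ell\}$ with $I_k\cap J_j\neq\emptyset$, for every real $\lambda\ge y$ and every $1\le k\le\ell$ the interval $\lambda I_k=(\lambda\alpha_k,\lambda\beta_k]$ contains at least $m_k+1$ primes. *)

(* Defs.v *)
From HB Require Import structures.
From mathcomp Require Import all_boot all_order all_algebra.
From mathcomp Require Import boolp reals exp.
Set Implicit Arguments. Unset Strict Implicit. Unset Printing Implicit Defensive.
Import Order.TTheory GRing.Theory Num.Theory.
Local Open Scope ring_scope.

Definition ellL (M : nat) : nat := (\sum_(p <- primes M) p ^ logn p M)%N.

Definition is_g (n G : nat) : Prop :=
  [/\ (0 < G)%N, (ellL G <= n)%N &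
      forall M : nat, (0 < M)%N -> (ellL M <= n)%N -> (M <= G)%N].

Definition theta {R : realType} (x : R) : R :=
  \sum_(p < `|Num.floor x|%N.+1 | prime p && (p%:R <= x)) ln (p%:R : R).

Definition nprimes_in {R : realType} (a b : R) : nat :=
  count (fun p => [&& prime p, a < p%:R & p%:R <= b]) (iota 0 `|Num.floor b|%N.+1).

Definition nprimes_in_ndvd {R : realType} (N : nat) (a b : R) : nat :=
  count (fun p => [&& prime p, ~~ (p %| N)%N, a < p%:R & p%:R <= b])
        (iota 0 `|Num.floor b|%N.+1).

(* g-sequence of length l: gamma_0 .. gamma_{l+1} (values beyond l+1 are irrelevant) *)
Definition g_sequence {R : realType} (l : nat) (gamma : nat -> R) : Prop :=
  [/\ gamma 0%N = 0, gamma 1%N = 1 / 2 &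
      forall k : nat, (1 <= k <= l)%N ->
        [/\ 0 < gamma k, gamma k < 1, gamma k < gamma k.+1 &
            gamma k.+1 < (1 + gamma k ^+ 2) / 2]].

(* Associated intervals I_k = (Ilo k, Ihi k], J_k = (Jlo k, Jhi k]. *)
Definition Ilo {R : realType} (gamma : nat -> R) (k : nat) : R :=
  if k == 0%N then 0 else 2 * gamma k.+1 - 1.
Definition Ihi {R : realType} (gamma : nat -> R) (k : nat) : R :=
  if k == 0%N then 1 / 4 else gamma k ^+ 2.
Definition Jlo {R : realType} (gamma : nat -> R) (k : nat) : R :=
  if k == 0%N then 0 else gamma k.
Definition Jhi {R : realType} (gamma : nat -> R) (k : nat) : R :=
  if k == 0%N then 1 / 2 else gamma k.+1.

Definition m_count {R : realType} (l : nat) (gamma : nat -> R) (k : nat) : nat :=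
  count (fun j => `[< exists x : R,
                       (Ilo gamma k < x <= Ihi gamma k) /\ (Jlo gamma j < x <= Jhi gamma j) >])
        (iota 0 l.+1).

Definition admissible {R : realType} (y : R) (l : nat) (gamma : nat -> R) : Prop :=
  12 <= y /\
  forall (lam : R) (k : nat), y <= lam -> (1 <= k <= l)%N ->
    (m_count l gamma k < nprimes_in (lam * Ilo gamma k) (lam * Ihi gamma k))%N.

(* Main.v *)
Require Import Defs.
From HB Require Import structures.
From mathcomp Require Import all_boot all_order all_algebra.
From mathcomp Require Import boolp reals exp.
From mathcomp Require Import zify ring lra.
Import Order.TTheory GRing.Theory Num.Theory.
Lemma ellL_mulX N p c : prime p -> ~~ (p %| N) -> (0 < N)%N -> (0 < c)%N ->
  ellL (N * p ^ c) = (ellL N + p ^ c)%N.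
Proof.
move=> pp pN N0 c0; rewrite /ellL.
have pc0 : (0 < p ^ c)%N by rewrite expn_gt0 prime_gt0.
have pe : perm_eq (primes (N * p ^ c)) (p :: primes N).
  apply: uniq_perm; first exact: primes_uniq.
    by rewrite /= primes_uniq andbT mem_primes pp N0 pN.
  move=> r; rewrite primesM // primesX // (primes_prime pp) !inE.
  by rewrite orbC.
rewrite (perm_big _ pe) big_cons /= addnC; congr addn; last first.
  rewrite lognM // (logn_coprime (_ : coprime p N)) ?prime_coprime //.
  by rewrite pfactorK.
apply: eq_big_seq => r; rewrite mem_primes => /and3P[pr _ rN].
have rp : r != p by apply: contraNneq pN => <-.
by rewrite lognM // lognX (logn_prime r pp) (negbTE rp) muln0 addn0.
Qed.

Lemma ellL_remove G r : prime r -> (r %| G)%N -> (0 < G)%N ->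
  exists N, [/\ G = (N * r)%N, (0 < N)%N & (ellL N + r <= ellL G)%N].
Proof.
move=> pr rG G0; have [m cm Gm] := pfactor_coprime pr G0.
have m0 : (0 < m)%N by move: G0; rewrite Gm muln_gt0 => /andP[].
have rm : ~~ (r %| m) by rewrite -prime_coprime.
have e0 : (0 < logn r G)%N by rewrite logn_gt0 mem_primes pr G0.
have r1 : (1 < r)%N by apply: prime_gt1.
move: e0 Gm; case: (logn r G) => [//|[|e]] _ Gm.
  exists m; split => //.
  by rewrite Gm ellL_mulX // expn1.
exists (m * r ^ e.+1)%N; split.
- by rewrite Gm -mulnA -expnSr.
- by rewrite muln_gt0 m0 expn_gt0 prime_gt0.
rewrite Gm !ellL_mulX // -addnA leq_add2l (expnS r e.+1).
have : (r ^ e.+1 * 2 <= r * r ^ e.+1)%N by rewrite mulnC leq_mul2r r1 orbT.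
have : (0 < r ^ e.+1)%N by rewrite expn_gt0 prime_gt0.
have : (r <= r ^ e.+1)%N by rewrite -[X in (X <= _)%N]expn1 leq_pexp2l // prime_gt0.
lia.
Qed.
Lemma pow_cases p a : (1 < p)%N -> (0 < a)%N -> p ^ a = p \/ (p * p <= p ^ a)%N.
Proof.
move=> p1; case: a => [//|[|a]] _; first by left; rewrite expn1.
right; rewrite mulnn leq_pexp2l //; lia.
Qed.

Lemma arith_k0 p1 p2 q : prime p1 -> prime p2 -> (p1 < p2)%N -> (2 * p2 <= q)%N ->
  (11 <= q)%N ->
  exists a b, [/\ (0 < a)%N, (0 < b)%N, (p1 ^ a + p2 ^ b <= q)%N & (q < p1 ^ a * p2 ^ b)%N].
Proof.
move=> pp1 pp2 lt12 h2 h11.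
have g1 := prime_gt1 pp1; have g2 := prime_gt1 pp2.
set a := trunc_log p1 (q - p2); set b := trunc_log p2 (q - p1).
have a0 : (0 < a)%N by apply: (@trunc_log_max p1 (q - p2) 1) => //; rewrite expn1; lia.
have b0 : (0 < b)%N by apply: (@trunc_log_max p2 (q - p1) 1) => //; rewrite expn1; lia.
have xle : (p1 ^ a <= q - p2)%N by apply: trunc_logP => //; lia.
have xlt : (q - p2 < p1 ^ a * p1)%N by rewrite -expnSr; apply: trunc_log_ltn.
have yle : (p2 ^ b <= q - p1)%N by apply: trunc_logP => //; lia.
have ylt : (q - p1 < p2 ^ b * p2)%N by rewrite -expnSr; apply: trunc_log_ltn.
case: (ltnP q (p1 ^ a * p2)) => H1.
  exists a, 1%N; split => //; rewrite expn1 //; lia.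
case: (ltnP q (p1 * p2 ^ b)) => H2.
  exists 1%N, b; split => //; rewrite expn1 //; lia.
exfalso.
move: (p1 ^ a) (p2 ^ b) (@pow_cases _ _ g1 a0) (@pow_cases _ _ g2 b0) xle xlt yle ylt H1 H2
  => x y hx hy xle xlt yle ylt H1 H2.
have E1 : (p2 * (q - p2) < p1 * q)%N by nia.
have E2 : (p2 < 2 * p1)%N by nia.
have E3 : (q < p2 * p2)%N by nia.
case: hx => [ex|hx]; last by nia.
case: hy => [ey|hy]; last by nia.
subst x y.
have E4 : (p2 = p1.+1)%N by nia.
subst p2.
have : p1 = 2%N.
  case: (even_prime pp1) => // o1.
  case: (even_prime pp2) => [|o2]; first by lia.
  by move: o2; rewrite /= o1.
move=> ?; subst p1; lia.
Qed.
Lemma lin1 u v x y q : (x + y <= q)%N -> (u + q <= v)%N -> (u + x + y <= v)%N.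
Proof. lia. Qed.
Lemma lin2 u v w (p1 p2 q Q : nat) : (p1 + p2 <= q + Q)%N -> (v + q <= w)%N -> (u + Q <= v)%N -> (u + p1 + p2 <= w)%N.
Proof. lia. Qed.
Lemma exch_k0 n G q p1 p2 : is_g n G -> prime q -> (q %| G)%N -> (11 <= q)%N ->
  prime p1 -> prime p2 -> (p1 < p2)%N -> (2 * p2 <= q)%N ->
  ~~ (p1 %| G)%N -> ~~ (p2 %| G)%N -> False.
Proof.
move=> [G0 Gn Gmax] pq qG q11 pp1 pp2 lt12 h2 n1 n2.
have [a [b [a0 b0 hs hp]]] := @arith_k0 _ _ _ pp1 pp2 lt12 h2 q11.
have [N [GN N0 hN]] := @ellL_remove _ _ pq qG G0.
have NG : (N %| G)%N by rewrite GN dvdn_mulr.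
have n1' : ~~ (p1 %| N)%N by apply: contra n1 => h; apply: dvdn_trans h NG.
have n2' : ~~ (p2 %| N * p1 ^ a)%N.
  rewrite Euclid_dvdM // negb_or; apply/andP; split.
    by apply: contra n2 => h; apply: dvdn_trans h NG.
  by rewrite Euclid_dvdX // dvdn_prime2 // negb_and eq_sym neq_ltn lt12.
have M0 : (0 < N * p1 ^ a)%N by rewrite muln_gt0 N0 expn_gt0 prime_gt0.
have hM := @ellL_mulX _ _ _ pp2 n2' M0 b0.
have hM2 := @ellL_mulX _ _ _ pp1 n1' N0 a0.
have Mp : (0 < N * p1 ^ a * p2 ^ b)%N by rewrite muln_gt0 M0 expn_gt0 prime_gt0.
have Ml : (ellL (N * p1 ^ a * p2 ^ b) <= n)%N.
  rewrite hM hM2; apply: leq_trans Gn; move: hs hN.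
  by move: (ellL N) (ellL G) (p1 ^ a) (p2 ^ b) => u v x y; apply: lin1.
have le := Gmax _ Mp Ml; rewrite GN in le.
have : (N * q < N * (p1 ^ a * p2 ^ b))%N by rewrite ltn_pmul2l.
by rewrite mulnA ltnNge le.
Qed.

Lemma exch_k n G q Q p1 p2 : is_g n G -> prime q -> (q %| G)%N ->
  prime Q -> (Q %| G)%N -> Q != q ->
  prime p1 -> prime p2 -> (p1 < p2)%N ->
  ~~ (p1 %| G)%N -> ~~ (p2 %| G)%N ->
  (p1 + p2 <= q + Q)%N -> (q * Q < p1 * p2)%N -> False.
Proof.
move=> [G0 Gn Gmax] pq qG pQ QG Qq pp1 pp2 lt12 n1 n2 hs hp.
have [N [GN N0 hN]] := @ellL_remove _ _ pq qG G0.
have QN : (Q %| N)%N.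
  by move: QG; rewrite GN Euclid_dvdM // (dvdn_prime2 pQ pq) (negbTE Qq) orbF.
have [N' [NN' N'0 hN']] := @ellL_remove _ _ pQ QN N0.
have NG : (N' %| G)%N by rewrite GN NN' -mulnA dvdn_mulr.
have n1' : ~~ (p1 %| N')%N by apply: contra n1 => h; apply: dvdn_trans h NG.
have n2' : ~~ (p2 %| N' * p1 ^ 1)%N.
  rewrite Euclid_dvdM // negb_or; apply/andP; split.
    by apply: contra n2 => h; apply: dvdn_trans h NG.
  by rewrite Euclid_dvdX // dvdn_prime2 // negb_and eq_sym neq_ltn lt12.
have M0 : (0 < N' * p1 ^ 1)%N by rewrite muln_gt0 N'0 expn_gt0 prime_gt0.
have hM := @ellL_mulX _ _ _ pp2 n2' M0 (isT : (0 < 1)%N).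
have hM2 := @ellL_mulX _ _ _ pp1 n1' N'0 (isT : (0 < 1)%N).
have Mp : (0 < N' * p1 ^ 1 * p2 ^ 1)%N by rewrite muln_gt0 M0 expn_gt0 prime_gt0.
have Ml : (ellL (N' * p1 ^ 1 * p2 ^ 1) <= n)%N.
  rewrite hM hM2 !expn1; apply: leq_trans Gn; move: hs hN hN'.
  by move: (ellL N') (ellL N) (ellL G) => u v w; apply: lin2.
have le := Gmax _ Mp Ml; rewrite GN NN' !expn1 in le.
have : (N' * (Q * q) < N' * (p1 * p2))%N by rewrite ltn_pmul2l // mulnC.
by rewrite mulnA ltnNge mulnA le.
Qed.
Lemma count2 {a : pred nat} {s} : sorted ltn s -> (1 < count a s)%N ->
  exists p1 p2, [/\ (p1 < p2)%N, a p1 & a p2].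
Proof.
move=> so; rewrite -size_filter.
have : sorted ltn (filter a s) by apply: sorted_filter => //; exact: ltn_trans.
have : forall x, x \in filter a s -> a x by move=> x; rewrite mem_filter => /andP[].
case: (filter a s) => [|x [|y t]] //= H /andP[xy _] _.
by exists x, y; split => //; apply: H; rewrite !inE eqxx ?orbT.
Qed.

Lemma count_iota_le (a b : pred nat) N M : (forall p, a p -> b p) ->
  (forall p, a p -> (p < M)%N) -> (count a (iota 0 N) <= count b (iota 0 M))%N.
Proof.
move=> ab aM; apply: (@leq_trans (count a (iota 0 (M + N)))).
  rewrite addnC iotaD count_cat; exact: leq_addr.
rewrite iotaD count_cat.
have -> : count a (iota (0 + M) N) = 0%N.
  apply/eqP; rewrite -leqn0 leqNgt -has_count; apply/hasPn => x.
  rewrite mem_iota add0n => /andP[Mx _]; apply/negP => /aM; rewrite ltnNge Mx.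
  done.
by rewrite addn0; apply: sub_count.
Qed.

Lemma count_cover (a : pred nat) (b : nat -> pred nat) (js s : seq nat) :
  uniq js -> (forall x, x \in s -> a x -> exists2 j, j \in js & b j x) ->
  (count a s <= \sum_(j <- js) count (b j) s)%N.
Proof.
move=> ujs H.
have -> : (\sum_(j <- js) count (b j) s = \sum_(x <- s) \sum_(j <- js) b j x)%N.
  rewrite exchange_big /=; apply: eq_bigr => j _.
  by rewrite -sum1_count big_mkcond.
rewrite -sum1_count big_mkcond /= big_seq_cond [X in (_ <= X)%N]big_seq_cond.
apply: leq_sum => x /andP[xs _]; case ax: (a x) => //.
have [j jjs bj] := H x xs ax.
by rewrite (bigD1_seq j) //= bj.
Qed.
Local Open Scope ring_scope.

Lemma nat_le_floor (R : realType) (x : R) p : p%:R <= x -> (p < `|Num.floor x|.+1)%N.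
Proof.
move=> h; have : (p%:Z <= Num.floor x) by rewrite floor_ge_int.
move=> h2; rewrite ltnS; lia.
Qed.

Lemma gam_pos (R : realType) l (gamma : nat -> R) j : g_sequence l gamma ->
  (1 <= j <= l.+1)%N -> 0 < gamma j /\ gamma j < 1.
Proof.
case=> g0 g1 gk /andP[j1 jl].
case: (ltnP j l.+1) => jl'.
  by have [? ? _ _] := gk j (introT andP (conj j1 jl')).
have -> : j = l.+1 by apply/eqP; rewrite eqn_leq jl jl'.
case: (posnP l) => [l0|l0].
  subst l; rewrite g1; split; lra.
have [a b c d] := gk l (introT andP (conj l0 (leqnn l))).
split; first lra.
apply: (lt_le_trans d); rewrite ler_pdivrMr //; nra.
Qed.

Lemma gam_cover (R : realType) l (gamma : nat -> R) : g_sequence l gamma ->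
  forall K, (1 <= K <= l.+1)%N -> forall x, 0 < x -> x <= gamma K ->
  exists2 j, (j < K)%N & Jlo gamma j < x <= Jhi gamma j.
Proof.
move=> gs; have [g0 g1 gk] := gs.
elim=> [//|K IH] /andP[_ Kl] x x0 xK.
case: (posnP K) => [K0|K0].
  subst K; exists 0%N => //; rewrite /Jlo /Jhi /= x0 /=; by rewrite -g1.
case: (lerP x (gamma K)) => h.
  have [j jK hj] := IH (introT andP (conj K0 (ltnW Kl))) x x0 h.
  by exists j => //; apply: ltnW.
exists K => //; rewrite /Jlo /Jhi; case: eqP => [E|_]; first by rewrite E in K0.
by rewrite h xK.
Qed.
Lemma part1 (R : realType) n G l (gamma : nat -> R) : is_g n G -> g_sequence l gamma ->
  admissible ((max_pdiv G)%:R) l gamma ->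
  forall k, (k <= l)%N ->
  (nprimes_in_ndvd G ((max_pdiv G)%:R * Jlo gamma k) ((max_pdiv G)%:R * Jhi gamma k) <= 1)%N.
Proof.
move=> ig gs [q12 adm]; have [G0 Gn Gmax] := ig.
set q := max_pdiv G in q12 adm *.
have q12n : (12 <= q)%N by rewrite -(ler_nat R).
have G1 : (1 < G)%N.
  rewrite ltn_neqAle G0 andbT; apply/eqP => G1; move: q12n.
  by rewrite /q -G1.
have pq : prime q := max_pdiv_prime G1.
have qG : (q %| G)%N := max_pdiv_dvd G.
have q0 : (0 : R) < q%:R by rewrite ltr0n prime_gt0.
elim/ltn_ind => k IH kl.
rewrite leqNgt; apply/negP => /(count2 (iota_ltn_sorted 0 _)).
move=> [p1 [p2 [lt12 /and4P[pp1 n1 l1 u1] /and4P[pp2 n2 l2 u2]]]].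
case: (posnP k) => [k0|k0].
  subst k; rewrite /Jhi /= in u2.
  have h2 : (2 * p2 <= q)%N.
    rewrite -(ler_nat R) natrM; lra.
  by apply: (@exch_k0 _ _ _ _ _ ig pq qG _ pp1 pp2 lt12 h2 n1 n2); apply: ltnW.
have kn0 : (k == 0%N) = false by rewrite eqn0Ngt k0.
have [gk0 gk1] := @gam_pos _ _ _ _ gs (introT andP (conj k0 (leqW kl))).
have [gk'0 gk'1] := @gam_pos _ _ _ _ gs (introT andP (conj (ltn0Sn k) kl)).
rewrite /Jlo /Jhi kn0 in l1 u1 l2 u2.
pose E j := `[< exists x : R, (Ilo gamma k < x <= Ihi gamma k) /\ (Jlo gamma j < x <= Jhi gamma j) >].
have hQ : has (fun p => [&& prime p, q%:R * Ilo gamma k < p%:R,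
                  p%:R <= q%:R * Ihi gamma k & (p %| G)%N])
            (iota 0 `|Num.floor (q%:R * Ihi gamma k)|.+1).
  apply/negPn/negP => /hasPn hn.
  have := adm q%:R k (lexx _) (introT andP (conj k0 kl)).
  rewrite ltnNge => /negP; apply.
  rewrite /nprimes_in.
  set s := iota 0 _.
  pose b j x := [&& (j < k)%N, E j, prime x, ~~ (x %| G)%N,
                 q%:R * Jlo gamma j < x%:R & x%:R <= q%:R * Jhi gamma j].
  apply: (leq_trans (@count_cover _ b _ _ (iota_uniq 0 l.+1) _)).
    move=> x xs /and3P[px lx ux].
    have nx : ~~ (x %| G)%N.
      by have := hn x xs; rewrite /= px lx ux.
    have x0 : (0 : R) < x%:R / q%:R by rewrite divr_gt0 // ltr0n prime_gt0.
    have xq : x%:R / q%:R <= gamma k.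
      rewrite ler_pdivrMr // mulrC; apply: (le_trans ux).
      rewrite /Ihi kn0 ler_pM2l //; nra.
    have [j jk hj] := @gam_cover _ _ _ gs _ (introT andP (conj k0 (leqW kl))) _ x0 xq.
    exists j; first by rewrite mem_iota add0n (leq_trans jk (leqW kl)).
    rewrite /b jk px nx /=.
    have hj' := hj.
    move: hj; rewrite ltr_pdivlMr // ler_pdivrMr // ![_ * q%:R]mulrC => ->.
    rewrite andbT /E; apply/asboolP; exists (x%:R / q%:R).
    rewrite ltr_pdivlMr // ler_pdivrMr // ![_ * q%:R]mulrC lx ux.
    by split => //; exact: hj'.
  rewrite /m_count -[count _ (iota 0 l.+1)]sum1_count [X in (_ <= X)%N]big_mkcond; apply: leq_sum => j _.
  case: (boolP ((j < k)%N && E j)) => [/andP[jk Ej]|H].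
    case: asboolP => [_|nP]; last by exfalso; apply: nP; move/asboolP: Ej.
    apply: leq_trans (IH j jk (leq_trans (ltnW jk) kl)).
    apply: count_iota_le => x; first by rewrite /b => /and3P[_ _ ->].
    by rewrite /b => /and3P[_ _ /and4P[_ _ _ ux]]; apply: nat_le_floor.
  have -> : count (b j) s = 0%N; last by [].
  apply/eqP; rewrite eqn0Ngt -has_count; apply/hasPn => x _; rewrite /b.
  by move: H; case: (j < k)%N; case: (E j).
have /hasP [Q Qs /and4P[pQ lQ uQ QG]] := hQ.
rewrite /Ilo /Ihi kn0 in lQ uQ.
have Qq : Q != q.
  apply/eqP => EQ; rewrite EQ in uQ.
  have : gamma k ^+ 2 < 1 by nra.
  nra.
have hs : (p1 + p2 <= q + Q)%N.
  rewrite -(ler_nat R) !natrD; nra.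
have hp : (q * Q < p1 * p2)%N.
  rewrite -(ltr_nat R) !natrM.
  have qg0 : 0 <= q%:R * gamma k by rewrite mulr_ge0 // ltW.
  have h1 : q%:R * Q%:R <= (q%:R * gamma k) * (q%:R * gamma k).
    have -> : (q%:R * gamma k) * (q%:R * gamma k) = q%:R * (q%:R * gamma k ^+ 2) by ring.
    by rewrite ler_pM2l.
  apply: (le_lt_trans h1); apply: ltr_pM => //.
exact: (@exch_k _ _ _ _ _ _ ig pq qG pQ QG Qq pp1 pp2 lt12 n1 n2 hs hp).
Qed.
Lemma sum_le_count (R : realType) (s : seq nat) (P : pred nat) (f : nat -> R) c :
  (forall p, P p -> f p <= c) -> \sum_(p <- s | P p) f p <= (count P s)%:R * c.
Proof.
move=> H; elim: s => [|x s IH]; first by rewrite big_nil mul0r.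
rewrite big_cons /=; case Px: (P x) => /=; last by rewrite add0n.
by rewrite natrD mulrDl mul1r lerD // H.
Qed.

Lemma ln_prod (R : realType) (s : seq nat) (P : pred nat) :
  (forall p, P p -> (0 < p)%N) ->
  ln (((\prod_(p <- s | P p) p)%N)%:R : R) = \sum_(p <- s | P p) ln (p%:R : R).
Proof.
move=> H; elim: s => [|x s IH]; first by rewrite !big_nil ln1.
rewrite !big_cons; case Px: (P x) => //.
have p0 : (0 < \prod_(p <- s | P p) p)%N by apply: prodn_cond_gt0 => i; apply: H.
rewrite natrM lnM ?IH // posrE ltr0n //; exact: H.
Qed.

Lemma prod_primes_dvd (s : seq nat) G : uniq s ->
  (forall p, p \in s -> prime p && (p %| G)%N) -> (\prod_(p <- s) p %| G)%N.
Proof.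
elim: s => [|x s IH] /=; first by rewrite big_nil dvd1n.
move=> /andP[xs us] H; rewrite big_cons.
have /andP[px xG] := H x (mem_head _ _).
have cop : coprime x (\prod_(p <- s) p).
  rewrite big_seq; apply: (big_ind (fun m => coprime x m)); first by rewrite coprimen1.
    by move=> a b ha hb; rewrite coprimeMr ha hb.
  move=> i is_; have /andP[pi _] := H i (mem_behead (s := x :: s) is_).
  rewrite prime_coprime // dvdn_prime2 //; apply/eqP => E; subst i.
  by rewrite is_ in xs.
by rewrite Gauss_dvd // xG IH // => p ps; apply: H; rewrite in_cons ps orbT.
Qed.
Lemma gam_half (R : realType) l (gamma : nat -> R) j : g_sequence l gamma ->
  (1 <= j <= l.+1)%N -> 1 / 2 <= gamma j.
Proof.
move=> gs; have [g0 g1 gk] := gs.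
elim: j => [//|j IH] /andP[_ jl].
case: (posnP j) => [->|j0]; first by rewrite g1.
have [_ _ h _] := gk j (introT andP (conj j0 jl)).
by apply: le_trans (ltW h); apply: IH; rewrite j0 ltnW.
Qed.

Lemma theta_bound (R : realType) n G l (gamma : nat -> R) k : is_g n G -> g_sequence l gamma ->
  admissible ((max_pdiv G)%:R) l gamma -> (k <= l)%N ->
  theta ((max_pdiv G)%:R * gamma k.+1) <=
  ln (G%:R : R) + k%:R * ln ((max_pdiv G)%:R : R) + \sum_(1 <= j < k.+2) ln (gamma j).
Proof.
move=> ig gs adm kl.
have P1 := @part1 _ _ _ _ _ ig gs adm.
have [q12 _] := adm; have [G0 Gn Gmax] := ig.
have gs' := gs; have [g0 g1 gk] := gs'.
set q := max_pdiv G in q12 P1 *.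
have q12n : (12 <= q)%N by rewrite -(ler_nat R).
have G1 : (1 < G)%N.
  rewrite ltn_neqAle G0 andbT; apply/eqP => G1; move: q12n.
  by rewrite /q -G1.
have pq : prime q := max_pdiv_prime G1.
have qG : (q %| G)%N := max_pdiv_dvd G.
have q0 : (0 : R) < q%:R by rewrite ltr0n prime_gt0.
have [gK0 gK1] := @gam_pos _ _ _ k.+1 gs (introT andP (conj (ltn0Sn k) kl)).
set x := q%:R * gamma k.+1.
have xq : x < q%:R by rewrite /x -[X in _ < X]mulr1 ltr_pM2l.
rewrite /theta -(big_mkord (fun p : nat => prime p && (p%:R <= x)) (fun p : nat => ln (p%:R : R))) /index_iota subn0.
set s := iota 0 _.
rewrite (bigID (fun p => p %| G)%N) /=.
have A1 : \sum_(i <- s | (prime i && (i%:R <= x)) && (i %| G)%N) ln (i%:R : R)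
          <= ln (G%:R : R) - ln (q%:R : R).
  set P := (fun i : nat => (prime i && (i%:R <= x)) && (i %| G)%N).
  have Pp : forall i, P i -> (0 < i)%N by move=> i /andP[/andP[pi _] _]; apply: prime_gt0.
  have hd : (q * \prod_(i <- s | P i) i %| G)%N.
    have := @prod_primes_dvd (q :: [seq i <- s | P i]) G.
    rewrite big_cons big_filter; apply.
      rewrite /= filter_uniq ?iota_uniq // andbT mem_filter negb_and.
      by rewrite /P (lt_geF xq) andbF.
    move=> p; rewrite in_cons => /orP[/eqP->|]; first by rewrite pq qG.
    by rewrite mem_filter => /andP[/andP[/andP[-> _] ->] _].
  have hle := dvdn_leq G0 hd.
  have Pr0 : (0 < \prod_(i <- s | P i) i)%N by apply: prodn_cond_gt0.
  rewrite -ln_prod //.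
  rewrite lerBrDl -lnM ?posrE ?q0 ?ltr0n ?Pr0 //.
  have E : (q%:R * (\prod_(i <- s | P i) i)%:R : R) = ((q * \prod_(i <- s | P i) i)%N)%:R.
    by rewrite natrM.
  rewrite E.
  have qP0 : (0 < q * \prod_(i <- s | P i) i)%N by rewrite muln_gt0 Pr0 prime_gt0.
  by rewrite ler_ln ?posrE ?ltr0n ?qP0 ?ler_nat.
have A2 : \sum_(i <- s | (prime i && (i%:R <= x)) && ~~ (i %| G)%N) ln (i%:R : R)
          <= \sum_(0 <= j < k.+1) ln (q%:R * gamma j.+1).
  set T := (fun i : nat => (prime i && (i%:R <= x)) && ~~ (i %| G)%N).
  pose inJ j (i : nat) := (q%:R * Jlo gamma j < i%:R) && (i%:R <= q%:R * Jhi gamma j).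
  have lnp : forall i : nat, prime i -> 0 <= ln (i%:R : R).
    by move=> i pi; apply: ln_ge0; rewrite ler1n prime_gt0.
  apply: (le_trans (y := \sum_(0 <= j < k.+1) \sum_(i <- s | T i && inJ j i) ln (i%:R : R))).
    apply: (le_trans (y := \sum_(i <- s) \sum_(0 <= j < k.+1)
                             (if T i && inJ j i then ln (i%:R : R) else 0))); last first.
      by rewrite exchange_big /=; apply: ler_sum => j _; rewrite [X in _ <= X]big_mkcond.
    rewrite big_mkcond; apply: ler_sum => i _; case Ti: (T i) => /=;
      move: (Ti); rewrite /T => Ti'; rewrite Ti'; last by apply: sumr_ge0.
    move: (Ti) => /andP[/andP[pi ix] _].
    have i0 : (0 : R) < i%:R / q%:R by rewrite divr_gt0 // ltr0n prime_gt0.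
    have iq : i%:R / q%:R <= gamma k.+1 by rewrite ler_pdivrMr // mulrC.
    have [j jk hj] := @gam_cover _ _ _ gs k.+1 (introT andP (conj (ltn0Sn k) kl)) _ i0 iq.
    rewrite (bigD1_seq j) ?mem_index_iota ?jk ?iota_uniq //=.
    have -> : inJ j i.
      by move: hj; rewrite /inJ ltr_pdivlMr // ler_pdivrMr // ![_ * q%:R]mulrC.
    rewrite lerDl; apply: sumr_ge0 => j' _; case: ifP => // _; exact: lnp.
  apply: ler_sum_nat => j /andP[_ jk].
  have jl : (j <= l)%N by rewrite -ltnS (leq_trans jk) // ltnS.
  have Jh : Jhi gamma j = gamma j.+1.
    by rewrite /Jhi; case: eqP => // ->; rewrite g1.
  have gh : 1 / 2 <= gamma j.+1 by apply: (@gam_half _ _ _ _ gs); rewrite /= (leq_trans jk).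
  have c0 : 0 <= ln (q%:R * gamma j.+1) by apply: ln_ge0; nra.
  apply: (le_trans (@sum_le_count _ _ _ _ (ln (q%:R * gamma j.+1)) _)).
    move=> i /andP[/andP[/andP[pi _] _] /andP[_ iu]].
    rewrite ler_ln ?posrE ?ltr0n ?prime_gt0 // -?Jh //; nra.
  have cnt : (count (fun i => T i && inJ j i) s <= 1)%N.
    apply: leq_trans (P1 j jl); apply: count_iota_le => i.
      by move=> /andP[/andP[/andP[pi _] ni] /andP[li ui]]; rewrite pi ni li ui.
    by move=> /andP[_ /andP[_ iu]]; apply: nat_le_floor.
  have cR : ((count (fun i => T i && inJ j i) s)%:R <= (1 : R)) by rewrite lern1.
  move: cR; set cc := (count _ _)%:R; nra.
apply: (le_trans (lerD A1 A2)).
have -> : \sum_(0 <= j < k.+1) ln (q%:R * gamma j.+1) =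
          k.+1%:R * ln (q%:R : R) + \sum_(1 <= j < k.+2) ln (gamma j).
  rewrite (big_addn 0 k.+2 1) subn1 /=.
  transitivity (\sum_(0 <= j < k.+1) (ln (q%:R : R) + ln (gamma j.+1))).
    apply: eq_big_nat => j /andP[_ jk]; rewrite lnM // posrE //.
    have [] := @gam_pos _ _ _ j.+1 gs; last by [].
    by rewrite /= (leq_trans jk).
  rewrite big_split /= sumr_const_nat subn0; congr (_ + _); first by rewrite mulr_natl.
  by apply: eq_bigr => j _; rewrite addn1.
rewrite -natr1; lra.
Qed.
Theorem proposition2 (R : realType) (n G : nat) (l : nat) (gamma : nat -> R) :
  (1 <= n)%N -> is_g n G -> (1 <= l)%N -> g_sequence l gamma ->
  admissible ((max_pdiv G)%:R) l gamma ->
  let q : nat := max_pdiv G in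
  (forall k : nat, (k <= l)%N ->
     (nprimes_in_ndvd G (q%:R * Jlo gamma k) (q%:R * Jhi gamma k) <= 1)%N) /\
  (forall k : nat, (k <= l)%N ->
     let D : R := theta (q%:R * gamma k.+1) / q%:R - k%:R * ln (q%:R : R) / q%:R in
     0 < D ->
     q%:R <= ln (G%:R : R) / (D - (\sum_(1 <= j < k.+2) ln (gamma j)) / q%:R) /\
     ln (G%:R : R) / (D - (\sum_(1 <= j < k.+2) ln (gamma j)) / q%:R)
       <= ln (G%:R : R) / D).
Proof.
move=> n1 ig l1 gs adm q; split.
  by move=> k kl; exact: (@part1 _ _ _ _ _ ig gs adm k kl).
move=> k kl D D0.
have tb := @theta_bound _ _ _ _ _ k ig gs adm kl.
have [q12 _] := adm; have [G0 _ _] := ig.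
rewrite -/q in tb q12.
set S := \sum_(1 <= j < k.+2) ln (gamma j) in tb *.
have q0 : (0 : R) < q%:R by apply: lt_le_trans q12.
have S0 : S <= 0.
  rewrite /S big_seq_cond; apply: sumr_le0 => j /andP[]; rewrite mem_index_iota => /andP[j1 jk] _; apply: ln_le0.
  have jl : (1 <= j <= l.+1)%N by rewrite j1 -ltnS (leq_trans jk (kl : (k.+2 <= l.+2)%N)).
  by have [_ h] := @gam_pos _ _ _ j gs jl; apply: ltW.
have lnG0 : 0 <= ln (G%:R : R) by apply: ln_ge0; rewrite ler1n.
have SQ : S / q%:R <= 0 by rewrite pmulr_lle0 ?invr_gt0.
have E0 : 0 < D - S / q%:R by lra.
split.
  rewrite ler_pdivlMr //.
  have -> : q%:R * (D - S / q%:R) =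
            theta (q%:R * gamma k.+1) - k%:R * ln (q%:R : R) - S.
    by rewrite /D; field; rewrite lt0r_neq0.
  lra.
rewrite ler_wpM2l // lef_pV2 ?posrE //; lra.
Qed.
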